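(* Let $C$ be a self-dual code over $\mathbb{Z}_4+u\mathbb{Z}_4$ of length $n$. Then (a) $\phi(C)$ is a formally self-dual code over $\mathbb{Z}_4$ of length $2n$; (b) $\mu(C)$ is a self-orthogonal code over $\mathbb{Z}_4$ of length $n$, and $\alpha(C)$ is a self-orthogonal code over $\mathbb{F}_2+u\mathbb{F}_2$; (c) if $\nu(C)$ is self-orthogonal, then $\phi(C)$ is a self-dual code over $\mathbb{Z}_4$ of length $2n$.
   Context: $\mathbb{Z}_4+u\mathbb{Z}_4$ is the commutative ring of characteristic $4$ with $u^2=0$; $\mathbb{F}_2+u\mathbb{F}_2$ is the commutative ring $\{0,1,u,1+u\}$ of characteristic $2$ with $u^2=0$. A linear code of length $n$ over a ring $R$ is an $R$-submodule of $R^n$; its dual is taken with respect to the Euclidean inner product $\sum_i x_iy_i$ in $R$; self-orthogonal means $C\subseteq C^\perp$, self-dual means $C=C^\perp$. A linear code over $\mathbb{Z}_4$ is formally self-dual if it has the same Lee weight enumerator as its dual (Lee weight on $\mathbb{Z}_4$: $0,1,2,1$ for $0,1,2,3$). Maps: $\phi:(\mathbb{Z}_4+u\mathbb{Z}_4)^n\to\mathbb{Z}_4^{2n}$, $\phi(\overline{a}+u\overline{b})=(\overline{b},\overline{a}+\overline{b})$; $\mu(\overline{a}+u\overline{b})=\overline{a}$; $\nu(\overline{a}+u\overline{b})=\overline{b}$ (for $\overline{a},\overline{b}\in\mathbb{Z}_4^n$); $\alpha$ is coordinatewise reduction modulo $2$ from $\mathbb{Z}_4+u\mathbb{Z}_4$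 to $\mathbb{F}_2+u\mathbb{F}_2$. *)

(* Defs.v *)
From HB Require Import structures.
From mathcomp Require Import all_boot all_order all_algebra.
Set Implicit Arguments. Unset Strict Implicit. Unset Printing Implicit Defensive.
Import GRing.Theory.
Local Open Scope ring_scope.

(* The ring S + uS (u^2 = 0), for a finite commutative ring S.         *)
(* An element a + u b is represented by the pair (a, b) : S * S.       *)
(* We use S = 'Z_4 (giving Z4 + uZ4) and S = 'Z_2 (giving F2 + uF2).   *)

Definition uzero (S : finComNzRingType) : S * S := (0, 0).
Definition uadd (S : finComNzRingType) (x y : S * S) : S * S :=
  (x.1 + y.1, x.2 + y.2).
(* (a1 + u b1)(a2 + u b2) = a1 a2 + u (a1 b2 + b1 a2) since u^2 = 0 *)
Definition umul (S : finComNzRingType) (x y : S * S) : S * S :=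
  (x.1 * y.1, x.1 * y.2 + x.2 * y.1).

Notation uword S n := {ffun 'I_n -> (S * S)%type}.

Definition uzero_word (S : finComNzRingType) n : uword S n := [ffun _ => uzero S].
Definition uadd_word (S : finComNzRingType) n (x y : uword S n) : uword S n :=
  [ffun i => uadd (x i) (y i)].
Definition uscale_word (S : finComNzRingType) n (r : S * S) (x : uword S n)
  : uword S n := [ffun i => umul r (x i)].

Definition uip (S : finComNzRingType) n (x y : uword S n) : S * S :=
  \big[@uadd S/uzero S]_(i < n) umul (x i) (y i).

Definition ulinear (S : finComNzRingType) n (C : {set uword S n}) : Prop :=
  [/\ uzero_word S n \in C,
      (forall x y, x \in C -> y \in C -> uadd_word x y \in C) &
      (forall r x, x \in C -> uscale_word r x \in C)].

Definition udual (S : finComNzRingType) n (C : {set uword S n}) : {set uword S n} :=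
  [set y | [forall x in C, uip x y == uzero S]].

Definition u_self_orthogonal (S : finComNzRingType) n (C : {set uword S n}) : Prop :=
  ulinear C /\ C \subset udual C.
Definition u_self_dual (S : finComNzRingType) n (C : {set uword S n}) : Prop :=
  ulinear C /\ C = udual C.

Notation Z4 := 'Z_4.
Notation zword n := {ffun 'I_n -> Z4}.

Definition zip4 n (x y : zword n) : Z4 := \sum_(i < n) x i * y i.

Definition zlinear n (C : {set zword n}) : Prop :=
  [/\ [ffun _ => 0] \in C,
      (forall x y, x \in C -> y \in C -> [ffun i => x i + y i] \in C) &
      (forall (r : Z4) x, x \in C -> [ffun i => r * x i] \in C)].

Definition zdual n (C : {set zword n}) : {set zword n} :=
  [set y | [forall x in C, zip4 x y == 0]].

Definition z_self_orthogonal n (C : {set zword n}) : Prop :=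
  zlinear C /\ C \subset zdual C.
Definition z_self_dual n (C : {set zword n}) : Prop :=
  zlinear C /\ C = zdual C.

Definition leeZ4 (x : Z4) : nat :=
  match val x with 0%N => 0%N | 2%N => 2%N | _ => 1%N end.
Definition lee_weight n (x : zword n) : nat := (\sum_(i < n) leeZ4 (x i))%N.

(* number of codewords of Lee weight w: the coefficients of the Lee weight
   enumerator *)
Definition lee_count n (C : {set zword n}) (w : nat) : nat :=
  #|[set c in C | lee_weight c == w]|.

Definition formally_self_dual n (C : {set zword n}) : Prop :=
  zlinear C /\ forall w, lee_count C w = lee_count (zdual C) w.

(* phi(a + u b) = (b, a + b) *)
Definition phi n (c : uword Z4 n) : zword (n + n) :=
  [ffun i => match split i with
             | inl j => (c j).2
             | inr j => (c j).1 + (c j).2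
             end].
Definition mu n (c : uword Z4 n) : zword n := [ffun i => (c i).1].
Definition nu n (c : uword Z4 n) : zword n := [ffun i => (c i).2].

Definition red2 (x : Z4) : 'Z_2 := inZp (val x).
Definition alpha n (c : uword Z4 n) : uword 'Z_2 n :=
  [ffun i => (red2 (c i).1, red2 (c i).2)].

Definition phiC n (C : {set uword Z4 n}) : {set zword (n + n)} := (@phi n) @: C.
Definition muC n (C : {set uword Z4 n}) : {set zword n} := (@mu n) @: C.
Definition nuC n (C : {set uword Z4 n}) : {set zword n} := (@nu n) @: C.
Definition alphaC n (C : {set uword Z4 n}) : {set uword 'Z_2 n} := (@alpha n) @: C.

(* Main.v *)
Require Import Defs.
From HB Require Import structures.
From mathcomp Require Import all_boot all_order all_algebra.
From mathcomp Require Import ring.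
Set Implicit Arguments. Unset Strict Implicit. Unset Printing Implicit Defensive.
Import GRing.Theory.
Local Open Scope ring_scope.

Lemma red2D (x y : Z4) : red2 (x + y) = red2 x + red2 y.
Proof. by move: x y => [[|[|[|[|m]]]] Hx] [[|[|[|[|k]]]] Hy] //; apply/val_inj. Qed.
Lemma red2M (x y : Z4) : red2 (x * y) = red2 x * red2 y.
Proof. by move: x y => [[|[|[|[|m]]]] Hx] [[|[|[|[|k]]]] Hy] //; apply/val_inj. Qed.
Definition lift2 (s : 'Z_2) : Z4 := inZp (val s).
Lemma red2K (s : 'Z_2) : red2 (lift2 s) = s.
Proof. by move: s => [[|[|m]] Hs] //; apply/val_inj. Qed.
Lemma red20 : red2 0 = 0. Proof. by apply/val_inj. Qed.
Lemma leeN (x : Z4) : leeZ4 (- x) = leeZ4 x.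
Proof. by move: x => [[|[|[|[|m]]]] Hx]. Qed.

Lemma red2_sum n (F : 'I_n -> Z4) : red2 (\sum_(i < n) F i) = \sum_(i < n) red2 (F i).
Proof.
elim: n F => [|n IH] F; first by rewrite !big_ord0 red20.
by rewrite !big_ord_recr /= red2D IH.
Qed.

Lemma bigu (S : finComNzRingType) n (F : 'I_n -> S * S) :
  \big[@uadd S/uzero S]_(i < n) F i = (\sum_(i<n) (F i).1, \sum_(i<n) (F i).2).
Proof.
rewrite -(big_morph fst (id1 := 0) (op1 := +%R) (id2 := uzero S) (op2 := @uadd S)) //.
rewrite -(big_morph snd (id1 := 0) (op1 := +%R) (id2 := uzero S) (op2 := @uadd S)) //.
by case: (\big[_/_]_(i < n) F i).
Qed.

Lemma uipE (S : finComNzRingType) n (x y : uword S n) : uip x y =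
  (\sum_(i < n) (x i).1 * (y i).1, \sum_(i < n) ((x i).1 * (y i).2 + (x i).2 * (y i).1)).
Proof. by rewrite /uip bigu. Qed.

Definition psi n (c : uword Z4 n) : zword (n + n) :=
  [ffun i => match split i with
             | inl j => - (c j).2
             | inr j => (c j).1 + (c j).2
             end].

Lemma splitL n (j : 'I_n) : split (lshift n j) = inl j.
Proof. exact: (unsplitK (inl j)). Qed.
Lemma splitR n (j : 'I_n) : split (rshift n j) = inr j.
Proof. exact: (unsplitK (inr j)). Qed.

Lemma zip_phi_psi n (x y : uword Z4 n) :
  zip4 (phi x) (psi y) = (uip x y).1 + (uip x y).2.
Proof.
rewrite /zip4 big_split_ord uipE /= -big_split -big_split /=.
apply: eq_bigr => i _; rewrite !ffunE splitL splitR; ring.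
Qed.

Lemma zip_phi_phi n (x y : uword Z4 n) :
  zip4 (phi x) (phi y) = (uip x y).1 + (uip x y).2 + 2 * zip4 (nu x) (nu y).
Proof.
rewrite /zip4 big_split_ord uipE /= -big_split mulr_sumr -big_split -big_split /=.
apply: eq_bigr => i _; rewrite !ffunE splitL splitR; ring.
Qed.

Lemma zip_mu n (x y : uword Z4 n) : zip4 (mu x) (mu y) = (uip x y).1.
Proof. by rewrite uipE /zip4; apply: eq_bigr => i _; rewrite !ffunE. Qed.

Lemma lee_phi_psi n (c : uword Z4 n) : lee_weight (phi c) = lee_weight (psi c).
Proof.
rewrite /lee_weight !big_split_ord /=; congr (_ + _)%N; apply: eq_bigr => i _;
by rewrite !ffunE ?splitL ?splitR ?leeN.
Qed.

Lemma phi_inj n : injective (@phi n).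
Proof.
move=> x y E; apply/ffunP => j.
have := congr1 (fun f : zword (n + n) => f (lshift n j)) E; have := congr1 (fun f : zword (n + n) => f (rshift n j)) E.
rewrite !ffunE splitL splitR => E1 E2.
case: (x j) (y j) E1 E2 => a b [a' b'] /= E1 E2; subst b'.
by move/addIr: E1 => ->.
Qed.

Lemma psi_inj n : injective (@psi n).
Proof.
move=> x y E; apply/ffunP => j.
have := congr1 (fun f : zword (n + n) => f (lshift n j)) E; have := congr1 (fun f : zword (n + n) => f (rshift n j)) E.
rewrite !ffunE splitL splitR => E1 /oppr_inj E2.
case: (x j) (y j) E1 E2 => a b [a' b'] /= E1 E2; subst b'.
by move/addIr: E1 => ->.
Qed.

Lemma card_im_filter (T U : finType) (f : T -> U) (C : {set T}) (P : pred U) :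
  injective f -> #|[set z in f @: C | P z]| = #|[set c in C | P (f c)]|.
Proof.
move=> inj; rewrite -(card_imset _ inj); apply: eq_card => z; rewrite !inE.
apply/andP/imsetP => [[/imsetP[c cC ->] Pc]|[c]]; first by exists c; rewrite // inE cC.
by rewrite inE => /andP[cC Pc] ->; split => //; apply: imset_f.
Qed.

Section Main.
Variable n : nat.
Variable C : {set uword Z4 n}.
Hypothesis Clin : ulinear C.
Hypothesis CD : C = udual C.

Lemma memC y : y \in C -> forall x, x \in C -> uip x y = uzero Z4.
Proof. by rewrite {1}CD inE => /forall_inP H x xC; apply/eqP/H. Qed.

Lemma memC' y : (forall x, x \in C -> uip x y = uzero Z4) -> y \in C.
Proof. by move=> H; rewrite CD inE; apply/forall_inP => x xC; apply/eqP/H. Qed.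

Lemma dual_phi : zdual (phiC C) = (@psi n) @: C.
Proof.
case: Clin => C0 Cadd Cscale.
apply/setP => z; rewrite inE; apply/forall_inP/imsetP.
- move=> H.
  pose y : uword Z4 n := [ffun j => (z (rshift n j) + z (lshift n j), - z (lshift n j))].
  have Ez : z = psi y.
    apply/ffunP => i; rewrite ffunE; case: (split_ordP i) => j ->;
    rewrite ?splitL ?splitR ffunE /=; [by rewrite opprK | by rewrite addrK].
  exists y => //; apply: memC' => x xC.
  have h1 := H _ (imset_f (@phi n) xC); rewrite Ez zip_phi_psi in h1; move/eqP in h1.
  have h2 := H _ (imset_f (@phi n) (Cscale (0, 1) x xC)).
  rewrite Ez zip_phi_psi in h2; move/eqP in h2.
  have e1 : (uip (uscale_word (0, 1) x) y).1 = 0.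
    rewrite uipE /=; apply: big1 => i _; rewrite ffunE /umul /=; ring.
  have e2 : (uip (uscale_word (0, 1) x) y).2 = (uip x y).1.
    rewrite !uipE /=; apply: eq_bigr => i _; by rewrite ffunE /umul /=; ring.
  move: h2; rewrite e1 e2 add0r => h2.
  move: h1; rewrite h2 add0r => h1.
  by case: (uip x y) h1 h2 => a b /= -> ->.
- move=> [y yC ->] _ /imsetP[x xC ->].
  by rewrite zip_phi_psi (memC yC xC) /uzero /= addr0.
Qed.

Lemma lin_phi : zlinear (phiC C).
Proof.
case: Clin => C0 Cadd Cscale; split.
- apply/imsetP; exists (uzero_word Z4 n) => //; apply/ffunP => i; rewrite !ffunE.
  by case: split => j; rewrite ffunE /uzero /= ?addr0.
- move=> _ _ /imsetP[x xC ->] /imsetP[y yC ->]; apply/imsetP; exists (uadd_word x y); first exact: Cadd.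
  apply/ffunP => i; rewrite !ffunE.
  by case: split => j; rewrite ffunE /uadd /=; ring.
- move=> r _ /imsetP[x xC ->]; apply/imsetP; exists (uscale_word (r, 0) x); first exact: Cscale.
  apply/ffunP => i; rewrite !ffunE.
  by case: split => j; rewrite ffunE /umul /=; ring.
Qed.

Lemma lin_mu : zlinear (muC C).
Proof.
case: Clin => C0 Cadd Cscale; split.
- apply/imsetP; exists (uzero_word Z4 n) => //; apply/ffunP => i; by rewrite !ffunE.
- move=> _ _ /imsetP[x xC ->] /imsetP[y yC ->]; apply/imsetP; exists (uadd_word x y); first exact: Cadd.
  by apply/ffunP => i; rewrite !ffunE.
- move=> r _ /imsetP[x xC ->]; apply/imsetP; exists (uscale_word (r, 0) x); first exact: Cscale.
  by apply/ffunP => i; rewrite !ffunE.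
Qed.

Lemma lin_alpha : ulinear (alphaC C).
Proof.
case: Clin => C0 Cadd Cscale; split.
- apply/imsetP; exists (uzero_word Z4 n) => //; apply/ffunP => i; by rewrite !ffunE /uzero red20.
- move=> _ _ /imsetP[x xC ->] /imsetP[y yC ->]; apply/imsetP; exists (uadd_word x y); first exact: Cadd.
  by apply/ffunP => i; rewrite !ffunE /uadd /= !red2D.
- move=> r _ /imsetP[x xC ->]; apply/imsetP; exists (uscale_word (lift2 r.1, lift2 r.2) x); first exact: Cscale.
  by apply/ffunP => i; rewrite !ffunE /umul /= !red2D !red2M !red2K.
Qed.

Lemma orth_alpha : alphaC C \subset udual (alphaC C).
Proof.
apply/subsetP => _ /imsetP[y yC ->]; rewrite inE; apply/forall_inP => _ /imsetP[x xC ->].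
have := memC yC xC; rewrite !uipE /uzero => -[e1 e2].
apply/eqP; congr pair.
- transitivity (red2 (\sum_(i < n) (x i).1 * (y i).1)); last by rewrite e1 red20.
  by rewrite red2_sum; apply: eq_bigr => i _; rewrite !ffunE red2M.
- transitivity (red2 (\sum_(i < n) ((x i).1 * (y i).2 + (x i).2 * (y i).1))); last by rewrite e2 red20.
  by rewrite red2_sum; apply: eq_bigr => i _; rewrite !ffunE red2D !red2M.
Qed.

End Main.

Theorem theorem4p4 (n : nat) (C : {set uword Z4 n}) :
  u_self_dual C ->
  [/\ formally_self_dual (phiC C),
      z_self_orthogonal (muC C) /\ u_self_orthogonal (alphaC C) &
      (z_self_orthogonal (nuC C) -> z_self_dual (phiC C))].
Proof.
move=> [Clin CD]; split.
- split; first exact: lin_phi.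
  move=> w; rewrite /lee_count (dual_phi Clin CD) !card_im_filter; try exact: phi_inj; try exact: psi_inj.
  by apply: eq_card => c; rewrite !inE lee_phi_psi.
- split; split; [exact: lin_mu | | exact: lin_alpha | exact: orth_alpha].
  apply/subsetP => _ /imsetP[y yC ->]; rewrite inE; apply/forall_inP => _ /imsetP[x xC ->].
  by rewrite zip_mu (memC CD yC xC).
- move=> [_ nuO]; split; first exact: lin_phi.
  apply/eqP; rewrite eqEcard (dual_phi Clin CD) card_imset ?card_imset; [|exact: phi_inj|exact: psi_inj].
  rewrite leqnn andbT; apply/subsetP => _ /imsetP[y yC ->].
  have : phi y \in zdual (phiC C).
    rewrite inE; apply/forall_inP => _ /imsetP[x xC ->].
    have /subsetP/(_ _ (imset_f (@nu n) yC)) := nuO.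
    rewrite inE => /forall_inP/(_ _ (imset_f (@nu n) xC))/eqP h.
    by rewrite zip_phi_phi h (memC CD yC xC) /uzero /= !addr0 mulr0.
  by rewrite (dual_phi Clin CD).
Qed.
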